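(* Let $X=\{1,\dots,n\}$, $Y$ a finite set, $Q$ a symmetric irreducible stochastic matrix on $Y$ with eigenspace decomposition $L(Y)=\bigoplus_{j=0}^mW_j$ (notation in context). Let $2\le k\le n$ and let $\underline a=(a_0,a_1,\dots,a_m)$ be a type with $a_0+\cdots+a_m=k$, and $\underline a'=(a_0-1,a_1,\dots,a_m)$. Then $D_k$ maps $P_{k,\underline a}$ into $P_{k-1,\underline a'}$ (in particular $D_kF=0$ for $F\in P_{k,\underline a}$ when $a_0=0$), and, when $a_0\ge1$, $D_k^*$ maps $P_{k-1,\underline a'}$ into $P_{k,\underline a}$.
   Context: $Q=(q(y,y'))$ acts on $L(Y)=\{f:Y\to\mathbb C\}$ by $(Qf)(y)=\sum_{y'}q(y,y')f(y')$; let $\lambda_0=1,\lambda_1,\dots,\lambda_m$ be its distinct eigenvalues with eigenspaces $W_0,\dots,W_m$, where $W_0$ is the space of constant functions; every $f\in W_j$, $j\ge1$, satisfies $\sum_yf(y)=0$. For $0\le k\le n$, $\Theta_k$ is the set of functions $\theta$ whose domain $\mathrm{dom}(\theta)$ is a $k$-element subset of $X$ and which take values in $Y$ ($\Theta_0$ = the empty function). For $\varphi\in\Theta_{k-1},\theta\in\Theta_k$ write $\varphi\subseteq\theta$ if $\mathrm{dom}\varphi\subseteq\mathrm{dom}\theta$ and $\theta|_{\mathrm{dom}\varphi}=\varphi$. $L(\Theta_k)=\bigoplus_{|A|=k}L(Y^A)$, with inner product $\langle F,G\rangle=\sum_{\theta}F(\theta)\overline{G(\theta)}$. For $2\le k\le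 n$, $D_k:L(\Theta_k)\to L(\Theta_{k-1})$, $(D_kF)(\varphi)=\sum_{\theta\in\Theta_k:\varphi\subseteq\theta}F(\theta)$; for $1\le k\le n$, $D_k^*:L(\Theta_{k-1})\to L(\Theta_k)$, $(D_k^*F)(\theta)=\sum_{\varphi\in\Theta_{k-1}:\varphi\subseteq\theta}F(\varphi)$. A type is a tuple $\underline a=(a_0,\dots,a_m)$ of nonnegative integers; $\ell(\underline a)=a_1+\cdots+a_m$. For $|A|=k=a_0+\cdots+a_m$, a fundamental function of type $\underline a$ in $L(Y^A)$ is $F=\bigotimes_{j\in A}F^j$, $F(\theta)=\prod_{j\in A}F^j(\theta(j))$ for $\theta\in Y^A$ (and $0$ on other domains), where each $F^j$ lies in some $W_{i_j}$ and $\#\{j\in A:i_j=i\}=a_i$ for each $i$. $P_{k,\underline a,A}$ is the span of fundamental functions of type $\underline a$ in $L(Y^A)$, and $P_{k,\underline a}=\bigoplus_{|A|=k}P_{k,\underline a,A}$; if a type has a negative entry the corresponding space is $\{0\}$. *)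

(* Defs.v *)
From HB Require Import structures.
From mathcomp Require Import all_boot all_order all_algebra.
Set Implicit Arguments. Unset Strict Implicit. Unset Printing Implicit Defensive.
Import Order.TTheory GRing.Theory Num.Theory.
Local Open Scope ring_scope.

Section Defs.
Variables (C : numClosedFieldType) (Y : finType) (n : nat).

Definition Qact (q : Y -> Y -> C) (f : Y -> C) : Y -> C :=
  fun y => \sum_(y' : Y) q y y' * f y'.

Fixpoint qpow (q : Y -> Y -> C) (t : nat) (y y' : Y) : C :=
  match t with
  | 0 => (y == y')%:R
  | t'.+1 => \sum_(z : Y) q y z * qpow q t' z y'
  end.

Definition stochastic (q : Y -> Y -> C) : Prop :=
  (forall y y', 0 <= q y y') /\ (forall y, \sum_(y' : Y) q y y' = 1).

Definition symmetric_kernel (q : Y -> Y -> C) : Prop :=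
  forall y y', q y y' = q y' y.

Definition irreducible_kernel (q : Y -> Y -> C) : Prop :=
  forall y y', exists t, 0 < qpow q t y y'.

Definition eigensp (q : Y -> Y -> C) (c : C) (f : Y -> C) : Prop :=
  forall y, Qact q f y = c * f y.

Definition eigen_enumeration (q : Y -> Y -> C) (m : nat) (lam : 'I_m.+1 -> C) : Prop :=
  [/\ lam ord0 = 1, injective lam,
      (forall j, exists f, eigensp q (lam j) f /\ exists y, f y != 0) &
      (forall c f, eigensp q c f -> (exists y, f y != 0) -> exists j, c = lam j)].

(* Theta = partial functions X -> Y, X = 'I_n, encoded as {ffun 'I_n -> option Y};
   dom theta = the set of x with theta x <> None. *)
Definition Theta := {ffun 'I_n -> option Y}.

Definition dom (th : Theta) : {set 'I_n} := [set x | th x != None].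

Definition psub (ph th : Theta) : bool :=
  [forall x, (ph x != None) ==> (th x == ph x)].

(* D_k : L(Theta_k) -> L(Theta_{k-1}); elements of L(Theta_j) are functions
   Theta -> C, only their values on Theta_j being relevant. *)
Definition Dk (k : nat) (F : Theta -> C) : Theta -> C :=
  fun ph => if #|dom ph| == k.-1 then
              \sum_(th : Theta | (#|dom th| == k) && psub ph th) F th
            else 0.

Definition Dkstar (k : nat) (F : Theta -> C) : Theta -> C :=
  fun th => if #|dom th| == k then
              \sum_(ph : Theta | (#|dom ph| == k.-1) && psub ph th) F ph
            else 0.

(* Fundamental function of type a (a : 'I_m.+1 -> int, so that types with a
   negative entry have no fundamental function): F = (x)_{j in A} F^j with
   F^j in W_{i_j}, #{j in A : i_j = t} = a_t, |A| = k. *)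
Definition fundamental (q : Y -> Y -> C) (m : nat) (lam : 'I_m.+1 -> C)
  (k : nat) (a : 'I_m.+1 -> int) (F : Theta -> C) : Prop :=
  exists (A : {set 'I_n}) (i : 'I_n -> 'I_m.+1) (Fj : 'I_n -> Y -> C),
    [/\ #|A| = k,
        (forall t, (#|[set j in A | i j == t]|)%:Z = a t),
        (forall j, j \in A -> eigensp q (lam (i j)) (Fj j)) &
        (forall th, F th = if dom th == A then
                             \prod_(j in A) oapp (Fj j) 0 (th j)
                           else 0)].

(* P_{k,a} = span of all fundamental functions of type a (= the direct sum over
   |A| = k of the spans P_{k,a,A}); it is {0} when a has a negative entry. *)
Definition Pspace (q : Y -> Y -> C) (m : nat) (lam : 'I_m.+1 -> C)
  (k : nat) (a : 'I_m.+1 -> int) (F : Theta -> C) : Prop :=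
  exists (N : nat) (G : 'I_N -> Theta -> C),
    (forall r, fundamental q lam k a (G r)) /\
    (forall th, F th = \sum_(r < N) G r th).

End Defs.

(* Main.v *)
Require Import Defs.
From HB Require Import structures.
From mathcomp Require Import all_boot all_order all_algebra.
From mathcomp Require Import zify.
Set Implicit Arguments. Unset Strict Implicit. Unset Printing Implicit Defensive.
Import Order.TTheory GRing.Theory Num.Theory.
Local Open Scope ring_scope.

Section Aux.
Variables (C : numClosedFieldType) (Y : finType) (n : nat).
Variables (q : Y -> Y -> C) (m : nat) (lam : 'I_m.+1 -> C).
Local Notation Th := (Theta Y n).

Lemma Pspace_ext k a (F F' : Th -> C) : (forall th, F th = F' th) ->
  Pspace q lam k a F -> Pspace q lam k a F'.
Proof. by move=> E [N [G [H1 H2]]]; exists N, G; split=> // th; rewrite -E. Qed.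

Lemma Pspace0 k a : Pspace q lam k a (fun _ : Th => 0).
Proof. exists 0%N, (fun _ _ => 0); split; [by case | by move=> th; rewrite big_ord0]. Qed.

Lemma PspaceD k a (F G : Th -> C) : Pspace q lam k a F -> Pspace q lam k a G ->
  Pspace q lam k a (fun th => F th + G th).
Proof.
case=> [N1 [G1 [H1 E1]]] [N2 [G2 [H2 E2]]].
exists (N1 + N2)%N, (fun r => match split r with inl r1 => G1 r1 | inr r2 => G2 r2 end).
split; first by move=> r; case: (split r).
move=> th; rewrite big_split_ord /= E1 E2; congr (_ + _); apply: eq_bigr => r _.
- by rewrite -[lshift N2 r]/(unsplit (inl r)) unsplitK.
- by rewrite -[rshift N1 r]/(unsplit (inr r)) unsplitK.
Qed.

Lemma Pspace_sum k a (I : Type) (s : seq I) (P : pred I) (G : I -> Th -> C) :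
  (forall i, P i -> Pspace q lam k a (G i)) ->
  Pspace q lam k a (fun th => \sum_(i <- s | P i) G i th).
Proof.
move=> HG; elim: s => [|x s IH].
  by apply: Pspace_ext (Pspace0 _ _) => th; rewrite big_nil.
case Px: (P x).
  apply: Pspace_ext (PspaceD (HG x Px) IH) => th; by rewrite big_cons Px.
by apply: Pspace_ext IH => th; rewrite big_cons Px.
Qed.

Lemma Pspace_fund k a (F : Th -> C) : fundamental q lam k a F -> Pspace q lam k a F.
Proof. by move=> H; exists 1%N, (fun _ => F); split=> // th; rewrite big_ord1. Qed.

Lemma eigen_scale c f d : eigensp q c f -> eigensp q c (fun y => d * f y).
Proof.
move=> H y; rewrite /Qact.
under eq_bigr do rewrite mulrCA.
by rewrite -mulr_sumr -/(Qact q f y) H mulrCA.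
Qed.

Lemma fund_scale k a (F : Th -> C) d : (0 < k)%N -> fundamental q lam k a F ->
  fundamental q lam k a (fun th => d * F th).
Proof.
move=> k0 [A [i [Fj [HA Hc He HF]]]].
have [x0 x0A] : exists x0, x0 \in A by apply/card_gt0P; rewrite HA.
exists A, i, (fun j => if j == x0 then (fun y => d * Fj j y) else Fj j).
split=> //.
  by move=> j jA; case: eqP => _; [apply: eigen_scale|]; apply: He.
move=> th; rewrite HF; case: ifP => _; last by rewrite mulr0.
rewrite (bigD1 x0) //= [in RHS](bigD1 x0) //= eqxx mulrA; congr (_ * _).
  by case: (th x0) => //=; rewrite mulr0.
by apply: eq_bigr => j /andP[_ /negbTE ->].
Qed.

Lemma Pspace_scale k a (F : Th -> C) d : (0 < k)%N -> Pspace q lam k a F ->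
  Pspace q lam k a (fun th => d * F th).
Proof.
move=> k0 [N [G [HG E]]]; exists N, (fun r th => d * G r th); split.
  by move=> r; apply: fund_scale.
by move=> th; rewrite E mulr_sumr.
Qed.

Lemma sum_eig0 (Hs : stochastic q) (Hsym : symmetric_kernel q) c f :
  eigensp q c f -> c != 1 -> \sum_y f y = 0.
Proof.
move=> Hf Hc.
have E : \sum_y c * f y = \sum_y f y.
  transitivity (\sum_y Qact q f y); first by apply: eq_bigr => y _; rewrite Hf.
  rewrite /Qact exchange_big /=; apply: eq_bigr => y' _.
  rewrite -mulr_suml.
  have -> : \sum_i q i y' = 1 by rewrite -(Hs.2 y'); apply: eq_bigr => i _; rewrite Hsym.
  by rewrite mul1r.
apply/eqP; have : (c - 1) * \sum_y f y == 0 by rewrite mulrBl mul1r mulr_sumr E subrr.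
by rewrite mulf_eq0 subr_eq0 (negbTE Hc).
Qed.

Definition Gx (A : {set 'I_n}) (Fj : 'I_n -> Y -> C) (th : Th) : C :=
  if dom th == A then \prod_(j in A) oapp (Fj j) 0 (th j) else 0.

Lemma in_dom (th : Th) j : (j \in dom th) = (th j != None).
Proof. by rewrite /dom inE. Qed.

Lemma psub_dom (ph th : Th) : psub ph th -> dom ph \subset dom th.
Proof.
move=> H; apply/subsetP => j; rewrite !inE => Hj.
by move/forallP: H => /(_ j); rewrite Hj /= => /eqP ->.
Qed.

Lemma Dk_ext k (F F' : Th -> C) ph : (forall th, F th = F' th) -> Dk k F ph = Dk k F' ph.
Proof. by move=> E; rewrite /Dk; case: ifP => // _; apply: eq_bigr. Qed.

Lemma Dkstar_ext k (F F' : Th -> C) ph : (forall th, F th = F' th) -> Dkstar k F ph = Dkstar k F' ph.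
Proof. by move=> E; rewrite /Dkstar; case: ifP => // _; apply: eq_bigr. Qed.

Lemma Dk_sum k N (G : 'I_N -> Th -> C) ph :
  Dk k (fun th => \sum_(r < N) G r th) ph = \sum_(r < N) Dk k (G r) ph.
Proof. by rewrite /Dk; case: ifP => _; [exact: exchange_big | by rewrite big1]. Qed.

Lemma Dkstar_sum k N (G : 'I_N -> Th -> C) ph :
  Dkstar k (fun th => \sum_(r < N) G r th) ph = \sum_(r < N) Dkstar k (G r) ph.
Proof. by rewrite /Dkstar; case: ifP => _; [exact: exchange_big | by rewrite big1]. Qed.


Lemma Dk_fund k (A : {set 'I_n}) (Fj : 'I_n -> Y -> C) (k0 : (0 < k)%N) (HA : #|A| = k) (ph : Th) :
  Dk k (Gx A Fj) ph = \sum_(x in A) (\sum_y Fj x y) * Gx (A :\ x) Fj ph.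
Proof.
rewrite /Dk; case: eqP => Hph; last first.
  rewrite big1 // => x xA; rewrite /Gx; case: eqP => [E|_]; last by rewrite mulr0.
  by exfalso; apply: Hph; rewrite E -HA (cardsD1 x A) xA.
case: (boolP (dom ph \subset A)) => Hsub; last first.
  rewrite big1; last first.
    move=> th /andP[_ Hps]; rewrite /Gx; case: eqP => // Hd.
    by move: Hsub; rewrite -Hd (psub_dom Hps).
  rewrite big1 // => x xA; rewrite /Gx; case: eqP => [E|_]; last by rewrite mulr0.
  by move: Hsub; rewrite E subsetDl.
have c1 : #|A :\: dom ph| == 1%N.
  rewrite cardsD (setIidPr Hsub) HA Hph; apply/eqP; lia.
case/cards1P: c1 => x0 Ex0.
have Hx0 : forall j, (j \notin dom ph) && (j \in A) = (j == x0).
  by move=> j; move/setP: Ex0 => /(_ j); rewrite !inE.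
have x0A : x0 \in A by have := Hx0 x0; rewrite eqxx => /andP[].
have x0n : x0 \notin dom ph by have := Hx0 x0; rewrite eqxx => /andP[].
have EA : A :\ x0 = dom ph.
  apply/setP => j; rewrite in_setD1.
  case: (boolP (j \in dom ph)) => jd.
    rewrite (subsetP Hsub _ jd) andbT; apply/eqP => E; move: x0n; by rewrite -E jd.
  by have := Hx0 j; rewrite jd /= => ->; rewrite andNb.
rewrite [RHS](bigD1 x0) //= [X in _ + X]big1 ?addr0; last first.
  move=> x /andP[xA ne]; rewrite /Gx; case: eqP => [E|_]; last by rewrite mulr0.
  exfalso; move/setP: E => /(_ x); rewrite -EA !inE eqxx ne xA //.
rewrite /Gx -EA eqxx.
rewrite (bigID (fun th => dom th == A)) /= [X in _ + X]big1 ?addr0; last first.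
  by move=> th /andP[_ /negbTE]; rewrite /Gx => ->.
pose ext (y : Y) : Th := [ffun j => if j == x0 then Some y else ph j].
have Dext : forall y, dom (ext y) = A.
  move=> y; apply/setP => j; rewrite in_dom; rewrite /ext ffunE; case: (eqVneq j x0) => [->|ne]; first by rewrite x0A.
  by rewrite -in_dom -EA in_setD1 ne.
rewrite (eq_bigl (fun th => th \in [set ext y | y in [set: Y]])); last first.
  move=> th; apply/idP/imsetP.
    move=> /andP[/andP[_ Hps] /eqP Hd].
    have : x0 \in dom th by rewrite Hd.
    rewrite in_dom; case Ex: (th x0) => [y|] // _.
    exists y; first by rewrite in_setT.
    apply/ffunP => j; rewrite ffunE; case: eqP => [->|ne] //.
    case: (boolP (j \in dom ph)) => jd.
      by move: jd; rewrite in_dom => jd; move/forallP: Hps => /(_ j); rewrite jd /= => /eqP.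
    have jA : j \notin A by have := Hx0 j; rewrite jd /= => ->; apply/eqP.
    move: jd jA; rewrite in_dom -Hd in_dom !negbK => /eqP -> /eqP -> //.
  case=> y _ ->; rewrite Dext HA !eqxx /= andbT.
  apply/forallP => j; apply/implyP => Hj; rewrite ffunE; case: (eqVneq j x0) => [E|_] //.
  by move: x0n; rewrite -E in_dom Hj.
rewrite big_imset /=; last first.
  by move=> y1 y2 _ _ /ffunP /(_ x0); rewrite !ffunE eqxx => -[].
rewrite (eq_bigl (fun _ => true)); last by move=> y; rewrite in_setT.
rewrite mulr_suml; apply: eq_bigr => y _.
rewrite Dext eqxx (big_setD1 x0 x0A) /= ffunE eqxx /=; congr (_ * _).
by apply: eq_bigr => j; rewrite in_setD1 => /andP[ne _]; rewrite ffunE (negbTE ne).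
Qed.

Definition Fj1 (Fj : 'I_n -> Y -> C) (x : 'I_n) : 'I_n -> Y -> C :=
  fun j => if j == x then (fun _ => 1) else Fj j.

Lemma Dkstar_fund k (B : {set 'I_n}) (Fj : 'I_n -> Y -> C) (k0 : (0 < k)%N)
  (HB : #|B| = k.-1) (th : Th) :
  Dkstar k (Gx B Fj) th = \sum_(x | x \notin B) Gx (x |: B) (Fj1 Fj x) th.
Proof.
rewrite /Dkstar; case: eqP => Hth; last first.
  rewrite big1 // => x xB; rewrite /Gx; case: eqP => [E|_] //.
  by exfalso; apply: Hth; rewrite E cardsU1 xB HB; lia.
case: (boolP (B \subset dom th)) => Hsub; last first.
  rewrite big1; last first.
    move=> ph /andP[_ Hps]; rewrite /Gx; case: eqP => // Hd.
    by move: Hsub; rewrite -Hd (psub_dom Hps).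
  rewrite big1 // => x xB; rewrite /Gx; case: eqP => [E|_] //.
  by move: Hsub; rewrite E subsetUr.
have c1 : #|dom th :\: B| == 1%N.
  rewrite cardsD (setIidPr Hsub) HB Hth; apply/eqP; lia.
case/cards1P: c1 => x0 Ex0.
have Hx0 : forall j, (j \notin B) && (j \in dom th) = (j == x0).
  by move=> j; move/setP: Ex0 => /(_ j); rewrite !inE.
have x0d : x0 \in dom th by have := Hx0 x0; rewrite eqxx => /andP[].
have x0n : x0 \notin B by have := Hx0 x0; rewrite eqxx => /andP[].
have EB : dom th = x0 |: B.
  apply/setP => j; rewrite in_setU1.
  case: (boolP (j \in B)) => jB; first by rewrite (subsetP Hsub _ jB) orbT.
  by have := Hx0 j; rewrite jB /= orbF => ->.
rewrite [RHS](bigD1 x0) //= [X in _ + X]big1 ?addr0; last first.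
  move=> x /andP[xB ne]; rewrite /Gx EB; case: eqP => [E|_] //.
  exfalso; move/setP: E => /(_ x); rewrite !in_setU1 eqxx (negbTE xB) (negbTE ne) //.
rewrite /Gx EB eqxx (big_setU1 _ x0n) /= /Fj1 eqxx.
move: x0d; rewrite in_dom; case: (th x0) => // y _; rewrite /= mul1r.
have Hprod : \prod_(i in B) oapp (if i == x0 then fun=> 1 else Fj i) 0 (th i)
     = \prod_(i in B) oapp (Fj i) 0 (th i).
  apply: eq_bigr => j jB; case: (eqVneq j x0) => // E.
  by move: x0n; rewrite -E jB.
rewrite Hprod.
rewrite (bigID (fun ph => dom ph == B)) /= [X in _ + X]big1 ?addr0; last first.
  by move=> ph /andP[_ /negbTE]; rewrite /Gx => ->.
pose r : Th := [ffun j => if j \in B then th j else None].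
have Dr : dom r = B.
  apply/setP => j; rewrite in_dom /r ffunE; case: ifP => jB //.
  by rewrite -in_dom (subsetP Hsub _ jB).
rewrite (eq_bigl (pred1 r)); last first.
  move=> ph /=; apply/idP/eqP.
    move=> /andP[/andP[_ Hps] /eqP Hd]; apply/ffunP => j; rewrite /r ffunE.
    case: ifP => jB.
      have : ph j != None by rewrite -in_dom Hd.
      by move=> Hj; move/forallP: Hps => /(_ j); rewrite Hj /= => /eqP.
    have : j \notin dom ph by rewrite Hd jB.
    by rewrite in_dom negbK => /eqP.
  move=> ->; rewrite Dr HB !eqxx /= andbT.
  apply/forallP => j; apply/implyP; rewrite /r ffunE; case: ifP => _ //.
rewrite (big_pred1 r) // Dr eqxx.
by apply: eq_bigr => j jB; rewrite /r ffunE jB.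
Qed.
End Aux.

Theorem lemma7p3 (C : numClosedFieldType) (Y : finType) (n : nat)
  (q : Y -> Y -> C) (m : nat) (lam : 'I_m.+1 -> C)
  (Hstoch : stochastic q) (Hsym : symmetric_kernel q) (Hirr : irreducible_kernel q)
  (Hlam : eigen_enumeration q lam)
  (k : nat) (Hk2 : (2 <= k)%N) (Hkn : (k <= n)%N)
  (a : 'I_m.+1 -> nat) (Ha : (\sum_(t < m.+1) a t)%N = k) :
  let a' : 'I_m.+1 -> int := fun t => (a t)%:Z - (t == ord0)%:Z in
  (forall F : Theta Y n -> C, Pspace q lam k (fun t => (a t)%:Z) F ->
     Pspace q lam k.-1 a' (Dk k F)) /\
  (a ord0 = 0%N -> forall F : Theta Y n -> C,
     Pspace q lam k (fun t => (a t)%:Z) F -> forall ph, Dk k F ph = 0) /\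
  ((1 <= a ord0)%N -> forall F : Theta Y n -> C,
     Pspace q lam k.-1 a' F -> Pspace q lam k (fun t => (a t)%:Z) (Dkstar k F)).
Proof.
move=> a'.
have k0 : (0 < k)%N by lia.
have k10 : (0 < k.-1)%N by lia.
case: (Hlam) => [L0 Linj _ _].
have DkF : forall F : Theta Y n -> C, fundamental q lam k (fun t => (a t)%:Z) F ->
  exists (A : {set 'I_n}) (i : 'I_n -> 'I_m.+1) (Fj : 'I_n -> Y -> C), [/\ #|A| = k,
    (forall t, (#|[set j in A | i j == t]|)%:Z = (a t)%:Z),
    (forall j, j \in A -> eigensp q (lam (i j)) (Fj j)) &
    forall ph : Theta Y n, Dk k F ph = \sum_(x in A | i x == ord0) (\sum_y Fj x y) * Gx (A :\ x) Fj ph].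
  move=> F [A [i [Fj [HA Hc He HF]]]]; exists A, i, Fj; split=> // ph.
  rewrite (@Dk_ext _ _ _ k F (Gx A Fj) ph HF) (Dk_fund _ k0 HA).
  rewrite (bigID (fun x => i x == ord0)) /= [X in _ + X]big1 ?addr0 // => x /andP[xA ne].
  rewrite (sum_eig0 Hstoch Hsym (He x xA)) ?mul0r //.
  apply/eqP => E; apply: (negP ne); apply/eqP; apply: Linj; by rewrite E L0.
split; [|split].
- move=> F [N [G [HG EF]]].
  apply: (Pspace_ext (F := fun ph => \sum_(r < N) Dk k (G r) ph)).
    by move=> ph; rewrite (Dk_ext _ _ EF) Dk_sum.
  apply: Pspace_sum => r _.
  have [A [i [Fj [HA Hc He HD]]]] := DkF _ (HG r).
  apply: (Pspace_ext (fun ph => esym (HD ph))).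
  apply: Pspace_sum => x /andP[xA ix0].
  apply: Pspace_scale => //; apply: Pspace_fund.
  exists (A :\ x), i, Fj; split.
  + by rewrite (cardsD1 x A) xA in HA; lia.
  + move=> t; rewrite /a'.
    have -> : [set j in A :\ x | i j == t] = [set j in A | i j == t] :\ x.
      by apply/setP => j; rewrite !inE andbA.
    have H := Hc t; rewrite (cardsD1 x) !inE xA (eqP ix0) /= in H.
    by rewrite -H PoszD [(t == ord0)]eq_sym addrC addKr.
  + by move=> j; rewrite in_setD1 => /andP[_ jA]; exact: He.
  + by move=> th.
- move=> Ha0 F [N [G [HG EF]]] ph.
  rewrite (Dk_ext _ _ EF) Dk_sum big1 // => r _.
  have [A [i [Fj [HA Hc He HD]]]] := DkF _ (HG r).
  rewrite HD big1 // => x /andP[xA ix0]; exfalso.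
  have H := Hc ord0; rewrite Ha0 in H; move: H => [] /eqP; rewrite cards_eq0 => /eqP ET.
  have : x \in [set j in A | i j == ord0] by rewrite inE xA.
  by rewrite ET inE.
- move=> Ha0 F [N [G [HG EF]]].
  apply: (Pspace_ext (F := fun th => \sum_(r < N) Dkstar k (G r) th)).
    by move=> th; rewrite (Dkstar_ext _ _ EF) Dkstar_sum.
  apply: Pspace_sum => r _.
  case: (HG r) => B [i [Fj [HB Hc He HF]]].
  apply: (Pspace_ext (F := fun th => \sum_(x | x \notin B) Gx (x |: B) (Fj1 Fj x) th)).
    by move=> th; rewrite (@Dkstar_ext _ _ _ k (G r) (Gx B Fj) th HF) (Dkstar_fund _ k0 HB).
  apply: Pspace_sum => x xB; apply: Pspace_fund.
  exists (x |: B), (fun j => if j == x then ord0 else i j), (Fj1 Fj x); split.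
  + by rewrite cardsU1 xB HB; lia.
  + move=> t.
    have E : [set j in x |: B | (if j == x then ord0 else i j) == t] :\ x
             = [set j in B | i j == t].
      apply/setP => j; rewrite !inE; case: (eqVneq j x) => [->|ne] /=.
        by rewrite (negbTE xB).
      by [].
    have H := Hc t; rewrite /a' in H.
    rewrite (cardsD1 x) E !inE eqxx /= PoszD H.
    by rewrite [(t == ord0)]eq_sym addrC subrK.
  + move=> j; rewrite in_setU1 /Fj1; case: (eqVneq j x) => [->|ne] /=.
      move=> _ y; rewrite /Qact ?eqxx L0 mulr1.
      under eq_bigr do rewrite mulr1.
      exact: Hstoch.2.
    by move=> jB; exact: He.
  + by move=> th.
Qed.
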